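(* Let $(X,x)$ be a pointed diffeological space and let $\mathcal{G}$ be a local generating category of $X$ at $x$. Then there is a natural epimorphism of vector spaces from $\operatorname{colim}(\mathcal{G} \hookrightarrow \mathcal{G}(X,x) \to \mathrm{Vect})$ to $T_x(X)$. Moreover, if $\mathcal{G}$ is a final subcategory of $\mathcal{G}(X,x)$, then this map is an isomorphism.
   Context: A diffeological space is a set $X$ together with, for every open subset $U$ of every $\mathbb{R}^n$, a set of functions $U\to X$ called plots, such that constant maps are plots, the composite of a plot with a smooth map $V\to U$ between open subsets of Euclidean spaces is a plot, and a function which is locally a plot (on an open cover) is a plot. Smooth maps are maps sending plots to plots. For a pointed diffeological space $(X,x)$, let $\mathcal{G}(X,x)$ be the category whose objects are the plots $p:U\to X$ with $U$ a connected open neighbourhood of $0$ in some $\mathbb{R}^n$ and $p(0)=x$, and whose morphisms from $p:U\to X$ to $q:V\to X$ are germs at $0$ of smooth maps $f:W\to V$ with $W$ an open neighbourhood of $0$ in $U$, $f(0)=0$ and $p|_W=q\circ f$. The functor $\mathcal{G}(X,x)\to \mathrm{Vect}$ (real vector spaces) sends $p:U\to X$ to $T_0(U)$ and $[f]$ to the differential $f_*:T_0(U)\to T_0(V)$; the internal tangent space $T_x(X)$ is the colimit of this functor. A local generating set of $X$ at $x$ is a subset $G$ of the objects of $\mathcal{G}(X,x)$ such that for every object $p$ there is some $q\in G$ and a morphism $p\to q$ in $\mathcal{G}(X,x)$; a local generating category of $X$ at $x$ is a subcategory of $\mathcal{G}(X,x)$ whose set of objects is a local generating set. A subcategory $\mathcal{G}$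 is final if for every object $p$ of $\mathcal{G}(X,x)$ the comma category $p/\mathcal{G}$ is non-empty and connected. *)

(* Defs.v *)
From mathcomp Require Import all_boot all_algebra all_classical all_reals all_analysis.
From Stdlib Require Import Relations.
Import GRing.Theory Num.Theory.
Unset Printing Implicit Defensive.
Local Open Scope ring_scope.
Local Open Scope classical_set_scope.

Section Diffeology.
Variable R : realType.

Definition E (k : nat) : normedModType R := 'rV[R]_k.

Fixpoint iter_deriv (n m : nat) (vs : seq (E n)) (f : E n -> E m) : E n -> E m :=
  if vs is v :: vs' then fun y => 'D_v (iter_deriv n m vs' f) y else f.

Definition smooth_on (n m : nat) (U : set (E n)) (f : E n -> E m) : Prop :=
  forall vs : seq (E n),
    (forall y, U y -> {for y, continuous (iter_deriv n m vs f)}) /\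
    (forall y v, U y -> derivable (iter_deriv n m vs f) y v).

(* A diffeology on a type X.  A plot with domain U is encoded as a total
   function E n -> X of which only the values on U matter (plot_ext). *)
Record diffeology (X : Type) := Diffeology {
  plot : forall n : nat, set (E n) -> (E n -> X) -> Prop;
  plot_open : forall n U p, plot n U p -> open U;
  plot_ext : forall n (U : set (E n)) (p q : E n -> X),
      (forall u, U u -> p u = q u) -> plot n U p -> plot n U q;
  plot_const : forall n (U : set (E n)) (c : X), open U -> plot n U (fun _ => c);
  plot_comp : forall n m (U : set (E n)) (V : set (E m)) p (f : E m -> E n),
      plot n U p -> open V -> smooth_on m n V f -> f @` V `<=` U -> plot m V (p \o f);
  plot_local : forall n (U : set (E n)) p, open U ->
      (forall u, U u -> exists W : set (E n),
          [/\ open W, W u, W `<=` U & plot n W p]) -> plot n U p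
}.

Variables (X : Type) (D : diffeology X) (x : X).

Record gobj := GObj { gdim : nat; gdom : set (E gdim); gplot : E gdim -> X }.

Definition is_gobj (p : gobj) : Prop :=
  [/\ open (gdom p), connected (gdom p), gdom p 0,
      plot X D (gdim p) (gdom p) (gplot p) & gplot p 0 = x].

Definition is_grep (p q : gobj) (W : set (E (gdim p))) (f : E (gdim p) -> E (gdim q)) :=
  [/\ open W, W 0, W `<=` gdom p & smooth_on (gdim p) (gdim q) W f] /\
  [/\ f @` W `<=` gdom q, f 0 = 0 & forall w, W w -> gplot p w = gplot q (f w)].

(* f represents (the germ at 0 of) a morphism p -> q in G(X,x) *)
Definition ghom (p q : gobj) (f : E (gdim p) -> E (gdim q)) : Prop :=
  is_gobj p /\ is_gobj q /\ exists W, is_grep p q W f.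

Definition germ_eq (n m : nat) (f g : E n -> E m) : Prop :=
  \forall w \near (0 : E n), f w = g w.

Definition homs := forall p q : gobj, (E (gdim p) -> E (gdim q)) -> Prop.

(* (Ob, Hom) is a subcategory of G(X,x); Hom is a set of germs *)
Definition subcategory (Ob : gobj -> Prop) (Hom : homs) : Prop :=
  [/\ (forall p, Ob p -> is_gobj p),
      (forall p q f, Hom p q f -> [/\ Ob p, Ob q & ghom p q f]),
      (forall p q f g, Hom p q f -> ghom p q g -> germ_eq (gdim p) (gdim q) f g -> Hom p q g),
      (forall p, Ob p -> Hom p p id) &
      (forall p q r f g, Hom p q f -> Hom q r g -> Hom p r (g \o f))].

Definition local_generating_set (Ob : gobj -> Prop) : Prop :=
  forall p, is_gobj p -> exists q f, Ob q /\ ghom p q f.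

Definition local_generating_category (Ob : gobj -> Prop) (Hom : homs) : Prop :=
  subcategory Ob Hom /\ local_generating_set Ob.

Definition comma_obj (p : gobj) := {q : gobj & E (gdim p) -> E (gdim q)}.

Definition comma_valid (Ob : gobj -> Prop) (p : gobj) (a : comma_obj p) : Prop :=
  Ob (projT1 a) /\ ghom p (projT1 a) (projT2 a).

Definition comma_step (Ob : gobj -> Prop) (Hom : homs) (p : gobj)
    (a b : comma_obj p) : Prop :=
  [/\ comma_valid Ob p a, comma_valid Ob p b &
      exists h, Hom (projT1 a) (projT1 b) h /\ germ_eq (gdim p) (gdim (projT1 b)) (h \o projT2 a) (projT2 b)].

Definition final_subcategory (Ob : gobj -> Prop) (Hom : homs) : Prop :=
  forall p, is_gobj p ->
    (exists a : comma_obj p, comma_valid Ob p a) /\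
    (forall a b : comma_obj p, comma_valid Ob p a -> comma_valid Ob p b ->
       clos_refl_sym_trans _ (comma_step Ob Hom p) a b).

Definition is_lin (L1 L2 : lmodType R) (phi : L1 -> L2) : Prop :=
  forall (a : R) (u v : L1), phi (a *: u + v) = a *: phi u + phi v.

(* cocones and colimits of  (Ob, Hom) -> G(X,x) -> Vect,  p |-> T_0(U) = R^n,
   [f] |-> f_* = d f(0). *)
Definition cocone (Ob : gobj -> Prop) (Hom : homs) (L : lmodType R)
    (iota : forall p : gobj, E (gdim p) -> L) : Prop :=
  (forall p, Ob p -> is_lin _ _ (iota p)) /\
  (forall p q f, Hom p q f -> forall v, iota q ('d f 0 v) = iota p v).

Definition is_colimit (Ob : gobj -> Prop) (Hom : homs) (L : lmodType R)
    (iota : forall p : gobj, E (gdim p) -> L) : Prop :=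
  cocone Ob Hom L iota /\
  forall (L' : lmodType R) (iota' : forall p : gobj, E (gdim p) -> L'),
    cocone Ob Hom L' iota' ->
    exists phi : L -> L', [/\ is_lin _ _ phi,
      (forall p, Ob p -> forall v, phi (iota p v) = iota' p v) &
      (forall psi : L -> L', is_lin _ _ psi ->
         (forall p, Ob p -> forall v, psi (iota p v) = iota' p v) ->
         forall y, psi y = phi y)].

End Diffeology.

(* Main.v *)
From HB Require Import structures.
Require Import Defs.
From mathcomp Require Import all_boot all_algebra all_classical all_reals all_analysis.
From Stdlib Require ClassicalEpsilon.
Import GRing.Theory Num.Theory.
Import numFieldNormedType.Exports.
Local Open Scope ring_scope.
Local Open Scope classical_set_scope.

Section A.
Import order.Order.TTheory.
Variable R : realType.

Lemma diff_of_cand (V W : normedModType R) (f : V -> W) (df : {linear V -> W}) x :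
  continuous df -> f \o shift x = cst (f x) + df +o_ 0 id -> differentiable f x.
Proof.
move=> dfc dxf.
have hdf h : (f \o shift x = cst (f x) + h +o_ 0 id) ->
    h = f \o shift x - cst (f x) +o_ 0 id.
  move=> hdf; apply: eqaddoE.
  rewrite hdf addrAC -!addrA addrC !addrA subrK.
  rewrite -[LHS]addr0 -addrA; congr (_ + _).
  by apply/eqP; rewrite eq_sym addrC addr_eq0 oppo.
apply/diffP => /=.
apply: (@getPex _ (fun (df : {linear V -> W}) => continuous df /\
  forall y, f y = f (lim (nbhs x)) + df (y - lim (nbhs x))
                  +o_(y \near x) (y - lim (nbhs x)))).
exists df; split=> //; apply: eqaddoEx => z.
rewrite (hdf _ dxf) !addrA lim_id // /(_ \o _) /= subrK [f _ + _]addrC addrK.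
rewrite -addrA -[LHS]addr0; congr (_ + _).
apply/eqP; rewrite eq_sym addrC addr_eq0 oppox; apply/eqP.
rewrite [in LHS]littleo_center0 (comp_centerK x id).
by rewrite -[- _ in RHS](comp_centerK x).
Qed.

Definition lf {n} (c : 'I_n -> R) (w : 'rV[R]_n) : R := \sum_i w 0 i * c i.

Lemma lf_lin n (c : 'I_n -> R) : linear (lf c).
Proof.
move=> a u v; rewrite /lf scaler_sumr -big_split /=; apply: eq_bigr => i _.
by rewrite !mxE mulrDl -mulrA.
Qed.

HB.instance Definition _ n (c : 'I_n -> R) := GRing.isLinear.Build R _ _ _ (@lf n c) (@lf_lin n c).


Lemma deriv_line (V : normedModType R) (h : V -> R) (a v : V) (t : R) :
  derivable h (a + t *: v) v ->
  is_derive t 1 (fun s : R => h (a + s *: v)) ('D_v h (a + t *: v)).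
Proof.
have E : (fun r : R => r^-1 *: (((fun s : R => h (a + s *: v)) \o shift t) (r *: 1)
          - h (a + t *: v))) =
         (fun r : R => r^-1 *: ((h \o shift (a + t *: v)) (r *: v) - h (a + t *: v))).
  apply/funext => r /=; congr (_ *: (h _ - _)).
  by rewrite /shift /= [r%:A]mulr1 scalerDl addrCA addrA.
move=> hd; apply: DeriveDef.
  by rewrite /derivable E.
by rewrite /derive E.
Qed.

Lemma mvt_step (V : normedModType R) (h : V -> R) (a v : V) (t d eps : R) :
  (forall s : R, `|s| <= `|t| -> derivable h (a + s *: v) v /\
       `|'D_v h (a + s *: v) - d| <= eps) ->
  `|h (a + t *: v) - h a - t * d| <= `|t| * eps.
Proof.
move=> H.
have isd (s : R) : `|s| <= `|t| -> is_derive s (1 : R) (fun s : R => h (a + s *: v)) ('D_v h (a + s *: v)).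
  by move=> /H [] /deriv_line.
have [t0|tn0] := eqVneq t 0.
  by rewrite t0 scale0r addr0 subrr mul0r subr0 normr0 mul0r.
pose f := fun s : R => h (a + s *: v).
have key : exists2 c, `|c| <= `|t| & h (a + t *: v) - h a = 'D_v h (a + c *: v) * t.
  have inI (lo hi c : R) : lo < hi -> c \in `[lo, hi]%R -> `|lo| <= `|t| -> `|hi| <= `|t| -> `|c| <= `|t|.
    move=> _; rewrite in_itv /= => /andP[l1 l2] hl hh.
    have [c0|c0] := leP 0 c.
      by rewrite ger0_norm //; apply: le_trans hh; apply: le_trans l2 (ler_norm _).
    rewrite ltr0_norm //; apply: le_trans hl; rewrite -normrN; apply: le_trans (ler_norm _).
    by rewrite lerN2.
  have [tlt|tgt|teq] := ltgtP t 0; last by move: tn0; rewrite teq eqxx.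
  - have Hd : forall x, x \in `]t, 0[%R -> is_derive x (1:R) f ('D_v h (a + x *: v)).
      move=> c cin; have cc : `|c| <= `|t|.
        by apply: (inI t 0) => //; [exact: subset_itv_oo_cc|rewrite normr0].
      exact: (isd c cc).
    have Hc : {within `[t, 0], continuous f}.
      apply: derivable_within_continuous => c cin.
      have cc : `|c| <= `|t| by apply: (inI t 0) => //; rewrite normr0.
      by case: (isd c cc).
    have [c cin E1] := MVT tlt Hd Hc.
    exists c.
      by apply: (inI t 0) => //; [exact: subset_itv_oo_cc|rewrite normr0].
    move: E1; rewrite /f scale0r addr0 => E1.
    by rewrite -opprB E1 sub0r mulrN opprK.
  - have Hd : forall x, x \in `]0, t[%R -> is_derive x (1:R) f ('D_v h (a + x *: v)).
      move=> c cin; have cc : `|c| <= `|t|.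
        by apply: (inI 0 t) => //; [exact: subset_itv_oo_cc|rewrite normr0].
      exact: (isd c cc).
    have Hc : {within `[0, t], continuous f}.
      apply: derivable_within_continuous => c cin.
      have cc : `|c| <= `|t| by apply: (inI 0 t) => //; rewrite normr0.
      by case: (isd c cc).
    have [c cin E1] := MVT tgt Hd Hc.
    exists c.
      by apply: (inI 0 t) => //; [exact: subset_itv_oo_cc|rewrite normr0].
    move: E1; rewrite /f scale0r addr0 => E1.
    by rewrite E1 subr0.
case: key => c ct ->.
by rewrite mulrC -mulrBr normrM ler_wpM2l // (H c ct).2.
Qed.

Definition ev {n} (i : 'I_n) : 'rV[R]_n := delta_mx 0 i.

Lemma entry_le n (M : E R n) i j : `|M i j| <= `|M|.
Proof.
rewrite [X in _ <= X]/Num.Def.normr /= mx_normrE.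
exact: (le_bigmax _ _ (i, j)).
Qed.

Lemma mx_norm_le n (M : E R n) b : 0 <= b -> (forall i j, `|M i j| <= b) -> `|M| <= b.
Proof.
move=> b0 H; rewrite [X in X <= _]/Num.Def.normr /= mx_normrE.
by apply: bigmax_le => // -[i j] _; apply: H.
Qed.

Lemma lf_cont n (c : 'I_n -> R) : continuous (lf c : E R n -> R).
Proof.
move=> w; apply/(@cvgrPdist_le _ _ _ (nbhs (w : E R n)) (nbhs_filter _)) => e e0.
pose M := 1 + \sum_i `|c i|.
have M0 : 0 < M by apply: (lt_le_trans ltr01); rewrite lerDl sumr_ge0.
apply/nbhs_ballP; exists (e / M); first by apply: divr_gt0.
move=> z; rewrite -ball_normE /ball_ /= => wz.
rewrite -linearB /= /lf.
apply: (le_trans (ler_norm_sum _ _ _)).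
apply: (@le_trans _ _ (\sum_i `|w - z| * `|c i|)).
  apply: ler_sum => i _; rewrite normrM ler_wpM2r //; exact: entry_le.
rewrite -mulr_sumr.
apply: (@le_trans _ _ (`|w - z| * M)).
  by rewrite ler_wpM2l // lerDr.
by rewrite -ler_pdivlMr // ltW.
Qed.

Lemma C1_diff n (U : set (E R n)) (h : E R n -> R) (y : E R n) :
  open U -> U y ->
  (forall z v, U z -> derivable h z v) ->
  (forall i : 'I_n, {for y, continuous (fun z => 'D_(ev i) h z)}) ->
  differentiable h y.
Proof.
move=> oU Uy hd hc.
pose c i := 'D_(ev i) h y.
apply: (@diff_of_cand _ _ h (lf c) y); first exact: lf_cont.
apply/eqaddoP => e e0.
pose eps := e / n.+1%:R.
have eps0 : 0 < eps by apply: divr_gt0.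
have Pc : \forall z \near y, forall i, `|'D_(ev i) h z - c i| <= eps.
  apply: (@filter_forall _ _ _ (nbhs y) (nbhs_filter y)) => i.
  exact: ((@cvgrPdistC_le _ _ _ _ (nbhs_filter y) _ _).1 (hc i) eps eps0).
have PU : \forall z \near y, U z by apply: open_nbhs_nbhs; split.
have [d d0 Hd] := (nbhs_ballP _ _).1 (filterI Pc PU).
apply/nbhs_ballP; exists d => // w; rewrite -ball_normE /ball_ /= sub0r normrN => wd.
change (`|h (w + y) - (h y + lf c w)| <= e * `|w|).
pose s (k : nat) : E R n := \row_j (if (j < k)%N then w 0 j else 0).
have s0 : s 0%N = 0 by apply/matrixP => i j; rewrite !mxE.
have sn : s n = w.
  by apply/matrixP => i j; rewrite !mxE ltn_ord (ord1 i).
have sS (i : 'I_n) : s i.+1 = s i + w 0 i *: ev i.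
  apply/matrixP => a b; rewrite !mxE (ord1 a) eqxx /= ltnS leq_eqVlt.
  have [->|bi] := eqVneq b i; first by rewrite eqxx ltnn add0r mulr1.
  have bi' : (nat_of_ord b == nat_of_ord i) = false by apply/negbTE.
  by rewrite bi' /= mulr0 addr0.
have snorm (i : 'I_n) (t : R) : `|t| <= `|w| -> `|s i + t *: ev i| <= `|w|.
  move=> tw; apply: mx_norm_le => // a b; rewrite !mxE.
  have [->|bi] := eqVneq b i.
    by rewrite ltnn add0r (ord1 a) eqxx mulr1.
  rewrite andbF mulr0 addr0; case: ifP => _; last by rewrite normr0.
  exact: entry_le.
have Hterm (i : 'I_n) : `|h (y + s i.+1) - h (y + s i) - w 0 i * c i| <= `|w| * eps.
  rewrite sS addrA.
  apply: le_trans (@mvt_step _ h (y + s i) (ev i) (w 0 i) (c i) eps _) _.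
    move=> t ht.
    have tw : `|t| <= `|w| by exact: (le_trans ht (@entry_le _ w 0 i)).
    have := Hd (y + (s i + t *: ev i)).
    rewrite -ball_normE /ball_ /= opprD addrA subrr sub0r normrN.
    case=> [|Hc HU]; first by apply: le_lt_trans (snorm i t tw) wd.
    rewrite -addrA; split; first exact: hd.
    exact: Hc.
  by rewrite ler_wpM2r // ?(ltW eps0) // entry_le.
have Etel : h (w + y) - (h y + lf c w) =
    \sum_(i < n) (h (y + s i.+1) - h (y + s i) - w 0 i * c i).
  rewrite sumrB /lf.
  rewrite -(big_mkord xpredT (fun k => h (y + s k.+1) - h (y + s k))) telescope_sumr //.
  by rewrite sn s0 addr0 opprD addrA [w + y]addrC.
rewrite Etel; apply: le_trans (ler_norm_sum _ _ _) _.
apply: le_trans (ler_sum _ (fun i _ => Hterm i)) _.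
rewrite sumr_const card_ord -mulr_natr -mulrA [e * _]mulrC ler_wpM2l //.
rewrite /eps mulrAC ler_pdivrMr // ler_wpM2l ?(ltW e0) // ler_nat.
exact: leqnSn.
Qed.

Fixpoint Ck (k : nat) {n} (U : set (E R n)) (h : E R n -> R) : Prop :=
  match k with
  | 0 => forall y : E R n, U y -> {for y, continuous h}
  | k'.+1 => [/\ forall y : E R n, U y -> {for y, continuous h},
              forall y v : E R n, U y -> derivable h y v &
              forall v : E R n, Ck k' U (fun z => 'D_v h z)]
  end.

Lemma Ck_cont {k n} {U : set (E R n)} {h} : Ck k U h -> forall y, U y -> {for y, continuous h}.
Proof. by case: k => [|k] //= []. Qed.

Lemma Ck_S {k n} {U : set (E R n)} {h} : Ck k.+1 U h -> Ck k U h.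
Proof.
elim: k h => [|k IH] h /= [hc hd hD] //; split => // v.
exact: IH.
Qed.

Lemma nearU {n} {U : set (E R n)} {y} : open U -> U y -> \forall z \near y, U z.
Proof. by move=> oU Uy; apply: open_nbhs_nbhs; split. Qed.

Lemma cont_ext {n} (h g : E R n -> R) y : (\forall z \near y, h z = g z) ->
  {for y, continuous h} -> {for y, continuous g}.
Proof.
move=> Hn hc; rewrite /prop_for /continuous_at -(nbhs_singleton Hn).
exact: (cvg_trans (@near_eq_cvg _ _ (nbhs y) (nbhs_filter y) h g Hn) hc).
Qed.

Lemma Ck_ext {k n} {U : set (E R n)} {h g} : open U ->
  (forall z, U z -> h z = g z) -> Ck k U h -> Ck k U g.
Proof.
move=> oU; elim: k h g => [|k IH] h g hg.
  move=> hc y Uy; have Hn : \forall z \near y, h z = g z.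
    exact: (filterS hg (nearU oU Uy)).
  exact: cont_ext Hn (hc y Uy).
case=> hc hd hD; split.
- move=> y Uy; have Hn : \forall z \near y, h z = g z.
    by exact: (filterS hg (nearU oU Uy)).
  exact: cont_ext Hn (hc y Uy).
- move=> y v Uy; have Hn : \forall z \near y, h z = g z.
    by exact: (filterS hg (nearU oU Uy)).
  exact: near_eq_derivable Hn (hd y v Uy).
- move=> v; apply: (IH _ _ _ (hD v)) => z Uz.
  apply: near_eq_derive.
  exact: (filterS hg (nearU oU Uz)).
Qed.

Lemma Ck_cst {k n} {U : set (E R n)} (a : R) : open U -> Ck k U (fun _ => a).
Proof.
move=> oU; elim: k a => [|k IH] a.
  by move=> y _; exact: cst_continuous.
split.
- by move=> y _; exact: cst_continuous.
- by move=> y v _; exact: derivable_cst.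
- move=> v; apply: (Ck_ext oU _ (IH 0)) => z _.
  by rewrite (derive_cst a z v).
Qed.

Lemma Ck_add {k n} {U : set (E R n)} {h g} : open U ->
  Ck k U h -> Ck k U g -> Ck k U (fun z => h z + g z).
Proof.
move=> oU; elim: k h g => [|k IH] h g.
  move=> hc gc y Uy; exact: (cvgD (hc y Uy) (gc y Uy)).
case=> hc hd hD [gc gd gD]; split.
- move=> y Uy; exact: (cvgD (hc y Uy) (gc y Uy)).
- move=> y v Uy; exact: (derivableD (hd y v Uy) (gd y v Uy)).
- move=> v; apply: (Ck_ext oU _ (IH _ _ (hD v) (gD v))) => z Uz.
  by rewrite -(deriveD (hd z v Uz) (gd z v Uz)).
Qed.

Lemma Ck_sum {k n} {U : set (E R n)} {m} (F : 'I_m -> E R n -> R) : open U ->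
  (forall i, Ck k U (F i)) -> Ck k U (fun z => \sum_i F i z).
Proof.
move=> oU; elim: m F => [|m IH] F HF.
  by apply: (Ck_ext oU _ (Ck_cst 0 oU)) => z _; rewrite big_ord0.
have := Ck_add oU (IH (fun i => F (widen_ord (leqnSn m) i)) (fun i => HF _)) (HF ord_max).
by apply: Ck_ext => // z _; rewrite big_ord_recr.
Qed.

Lemma Ck_mul {k n} {U : set (E R n)} {h g} : open U ->
  Ck k U h -> Ck k U g -> Ck k U (fun z => h z * g z).
Proof.
move=> oU; elim: k h g => [|k IH] h g.
  move=> hc gc y Uy; exact: (cvgM (hc y Uy) (gc y Uy)).
move=> Hh Hg; move: (Hh) (Hg) => [hc hd hD] [gc gd gD]; split.
- move=> y Uy; exact: (cvgM (hc y Uy) (gc y Uy)).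
- move=> y v Uy; exact: (derivableM (hd y v Uy) (gd y v Uy)).
- move=> v.
  have := Ck_add oU (IH _ _ (Ck_S Hh) (gD v)) (IH _ _ (Ck_S Hg) (hD v)).
  apply: Ck_ext => // z Uz.
  by rewrite (deriveM (hd z v Uz) (gd z v Uz)).
Qed.

Lemma vec_cont {n l} (F : E R n -> E R l) y :
  (forall i : 'I_l, {for y, continuous (fun z => F z 0 i)}) -> {for y, continuous F}.
Proof.
move=> H; apply/(@cvgrPdist_le _ _ _ (nbhs y) (nbhs_filter y)) => e e0.
have : \forall t \near y, forall i, `|F y 0 i - F t 0 i| <= e.
  apply: (@filter_forall _ _ _ (nbhs y) (nbhs_filter y)) => i.
  exact: ((@cvgrPdist_le _ _ _ _ (nbhs_filter y) _ _).1 (H i) e e0).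
apply: filterS => t Ht; apply: mx_norm_le (ltW e0) _ => a b.
by rewrite (ord1 a) !mxE; exact: Ht.
Qed.

Lemma vec_diff {n l} (F : E R n -> E R l) y :
  (forall i : 'I_l, differentiable (fun z => F z 0 i) y) -> differentiable F y.
Proof.
move=> H.
have -> : F = \sum_i (fun z => F z 0 i *: (ev i : E R l)).
  rewrite fct_sumE; apply/funext => z; exact: row_sum_delta.
apply: differentiable_sum => i; exact: differentiableZl.
Qed.

Lemma chain_D {n l} (F : E R n -> E R l) (g : E R l -> R) z v :
  differentiable F z -> differentiable g (F z) ->
  'D_v (fun t => g (F t)) z = \sum_i 'D_v (fun t => F t 0 i) z * 'D_(ev i) g (F z).
Proof.
move=> dF dg.
have dgF : differentiable (g \o F) z by exact: differentiable_comp.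
rewrite (deriveE v dgF) diff_comp //= -(deriveE v dF).
rewrite (derive_mx (diff_derivable dF)).
set u := (\matrix_(i, j) _).
rewrite {1}(row_sum_delta u) linear_sum; apply: eq_bigr => i _.
by rewrite linearZ /= -(deriveE _ dg) /u mxE.
Qed.

Lemma Ck1_diff {k n} {U : set (E R n)} {h} y : open U -> U y -> Ck k.+1 U h -> differentiable h y.
Proof.
move=> oU Uy [hc hd hD]; apply: (@C1_diff _ U h y oU Uy) => // i.
exact: (Ck_cont (hD (ev i)) y Uy).
Qed.

Lemma Ck_comp k {n l} {U : set (E R n)} {V : set (E R l)} {F : E R n -> E R l} {g : E R l -> R} :
  open U -> open V -> (forall z, U z -> V (F z)) ->
  (forall i, Ck k U (fun z => F z 0 i)) -> Ck k V g -> Ck k U (fun z => g (F z)).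
Proof.
move=> oU oV; elim: k F g => [|k IH] F g FUV HF Hg.
  move=> y Uy; apply: (@continuous_comp _ _ _ F g).
    by apply: vec_cont => i; exact: (HF i y Uy).
  exact: (Hg (F y) (FUV y Uy)).
have dF z : U z -> differentiable F z.
  move=> Uz; apply: vec_diff => i; exact: (Ck1_diff z oU Uz (HF i)).
have dg w : V w -> differentiable g w.
  move=> Vw; exact: (Ck1_diff w oV Vw Hg).
move: (Hg) => [gc gd gD]; split.
- move=> y Uy; apply: (@continuous_comp _ _ _ F g).
    by apply: vec_cont => i; case: (HF i) => + _ _; apply.
  exact: (gc (F y) (FUV y Uy)).
- move=> y v Uy; apply: diff_derivable.
  exact: (differentiable_comp (dF y Uy) (dg _ (FUV y Uy))).
- move=> v.
  have := Ck_sum _ oU (fun i => Ck_mul oU (let: And3 _ _ D := HF i in D v)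
             (IH F _ FUV (fun j => Ck_S (HF j)) (gD (ev i)))).
  apply: Ck_ext => // z Uz.
  by rewrite (chain_D F g z v (dF z Uz) (dg _ (FUV z Uz))).
Qed.

Fixpoint iterR {n} (vs : seq (E R n)) (h : E R n -> R) : E R n -> R :=
  if vs is v :: vs' then fun y => 'D_v (iterR vs' h) y else h.

Definition SR {n} (U : set (E R n)) (h : E R n -> R) : Prop :=
  forall vs y, U y -> {for y, continuous (iterR vs h)} /\ forall v, derivable (iterR vs h) y v.

Lemma iterR_rcons {n} (vs : seq (E R n)) v h :
  iterR (rcons vs v) h = iterR vs (fun y => 'D_v h y).
Proof. by elim: vs => [|w vs IH] //=; rewrite IH. Qed.

Lemma SR_Ck {n} {U : set (E R n)} {h} : SR U h -> forall k, Ck k U h.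
Proof.
move=> H k; elim: k h H => [|k IH] h H.
  by move=> y Uy; exact: (H [::] y Uy).1.
split.
- by move=> y Uy; exact: (H [::] y Uy).1.
- by move=> y v Uy; exact: (H [::] y Uy).2.
- move=> v; apply: IH => vs y Uy; rewrite -iterR_rcons; exact: H.
Qed.

Lemma Ck_SR {n} {U : set (E R n)} {h} : (forall k, Ck k U h) -> SR U h.
Proof.
move=> H vs; elim/last_ind: vs h H => [|vs v IH] h H y Uy.
  rewrite /=; split; first exact: (H 0%N y Uy).
  by move=> v; case: (H 1%N) => _ /(_ y v Uy).
rewrite iterR_rcons; apply: IH => // k.
by case: (H k.+1) => _ _ /(_ v).
Qed.

Lemma iter_coord {n m} {U : set (E R n)} {F : E R n -> E R m} : open U ->
  (forall vs y v, U y -> derivable (iter_deriv R n m vs F) y v) ->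
  forall vs y, U y -> forall j, iter_deriv R n m vs F y 0 j = iterR vs (fun z => F z 0 j) y.
Proof.
move=> oU H; elim=> [|v vs IH] y Uy j //=.
rewrite (derive_mx (H vs y v Uy)) mxE.
apply: near_eq_derive.
apply: (filterS _ (nearU oU Uy)) => t Ut; exact: (IH t Ut j).
Qed.

Lemma smooth_SR {n m} {U : set (E R n)} {F : E R n -> E R m} : open U ->
  smooth_on R n m U F -> forall j, SR U (fun z => F z 0 j).
Proof.
move=> oU sF j vs y Uy.
have Hd : forall vs y v, U y -> derivable (iter_deriv R n m vs F) y v.
  by move=> ws z v Uz; exact: ((sF ws).2 z v Uz).
have Hn : \forall t \near y, iter_deriv R n m vs F t 0 j = iterR vs (fun z => F z 0 j) t.
  apply: (filterS _ (nearU oU Uy)) => t Ut. exact: (iter_coord oU Hd vs t Ut j).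
split.
- apply: (cont_ext _ _ _ Hn).
  apply: (@continuous_comp _ _ _ (iter_deriv R n m vs F) (fun M : E R m => M 0 j)).
    exact: ((sF vs).1 y Uy).
  exact: coord_continuous.
- move=> v; apply: (near_eq_derivable Hn).
  by move/derivable_mxP: (Hd vs y v Uy); apply.
Qed.

Lemma SR_smooth {n m} (U : set (E R n)) (F : E R n -> E R m) : open U ->
  (forall j, SR U (fun z => F z 0 j)) -> smooth_on R n m U F.
Proof.
move=> oU H.
have P : forall vs y, U y -> (forall j, iter_deriv R n m vs F y 0 j = iterR vs (fun z => F z 0 j) y)
    /\ forall v, derivable (iter_deriv R n m vs F) y v.
  elim=> [|v vs IH].
    move=> y Uy; split => // w; apply/derivable_mxP => i j; rewrite (ord1 i).
    exact: ((H j [::] y Uy).2 w).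
  have Eq : forall y, U y -> forall j,
      iter_deriv R n m (v :: vs) F y 0 j = iterR (v :: vs) (fun z => F z 0 j) y.
    move=> y Uy j /=; rewrite (derive_mx ((IH y Uy).2 v)) mxE.
    apply: near_eq_derive.
    apply: (filterS _ (nearU oU Uy)) => t Ut; exact: ((IH t Ut).1 j).
  move=> y Uy; split; first exact: Eq.
  move=> w; apply/derivable_mxP => i j; rewrite (ord1 i).
  have Hn : \forall t \near y, iterR (v :: vs) (fun z => F z 0 j) t =
                            iter_deriv R n m (v :: vs) F t 0 j.
    by apply: (filterS _ (nearU oU Uy)) => t Ut; rewrite Eq.
  exact: (near_eq_derivable Hn ((H j (v :: vs) y Uy).2 w)).
move=> vs; split; last by move=> y v Uy; exact: (P vs y Uy).2.
move=> y Uy; apply: vec_cont => j.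
have Hn : \forall t \near y, iterR vs (fun z => F z 0 j) t = iter_deriv R n m vs F t 0 j.
  by apply: (filterS _ (nearU oU Uy)) => t Ut; rewrite (P vs t Ut).1.
exact: (cont_ext _ _ _ Hn (H j vs y Uy).1).
Qed.

Lemma smooth_diff {n m} (U : set (E R n)) (F : E R n -> E R m) y : open U ->
  smooth_on R n m U F -> U y -> differentiable F y.
Proof.
move=> oU sF Uy; apply: vec_diff => j.
exact: (Ck1_diff y oU Uy (SR_Ck (smooth_SR oU sF j) 1%N)).
Qed.

Lemma smooth_comp {n l m} (U : set (E R n)) (V : set (E R l))
    (F : E R n -> E R l) (G : E R l -> E R m) : open U -> open V ->
  smooth_on R n l U F -> smooth_on R l m V G -> (forall z, U z -> V (F z)) ->
  smooth_on R n m U (G \o F).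
Proof.
move=> oU oV sF sG FUV; apply: SR_smooth => // j; apply: Ck_SR => k.
apply: (@Ck_comp k _ _ U V F (fun w => G w 0 j) oU oV FUV (fun i => SR_Ck (smooth_SR oU sF i) k)).
exact: (SR_Ck (smooth_SR oV sG j) k).
Qed.

Lemma smooth_sub {n m} (U W : set (E R n)) (F : E R n -> E R m) :
  W `<=` U -> smooth_on R n m U F -> smooth_on R n m W F.
Proof.
move=> WU sF vs; split.
  by move=> y Wy; exact: ((sF vs).1 y (WU y Wy)).
by move=> y v Wy; exact: ((sF vs).2 y v (WU y Wy)).
Qed.

End A.

Section Range.
Variable R : realType.
Variables (L T : lmodType R) (phi : L -> T).
Hypothesis philin : is_lin R L T phi.

Definition rng : {pred T} := let _ := philin in fun y => `[< exists z, phi z = y >].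

Lemma phi0 : phi 0 = 0.
Proof.
have := philin 1 0 0; rewrite scale1r addr0 scale1r => h.
by apply: (addrI (phi 0)); rewrite addr0 -h.
Qed.

Lemma rng_closed : GRing.submod_closed rng.
Proof.
split.
  by apply/asboolP; exists 0; exact: phi0.
move=> a u v /asboolP [zu <-] /asboolP [zv <-].
by apply/asboolP; exists (a *: zu + zv); rewrite philin.
Qed.

HB.instance Definition _ := GRing.isSubmodClosed.Build _ _ rng rng_closed.

Record rtype := RT { rval : T; rvalP : rval \in rng }.

HB.instance Definition _ := [isSub for rval].
HB.instance Definition _ := [Choice of rtype by <:].
HB.instance Definition _ := [SubChoice_isSubLmodule of rtype by <:].

Lemma rvalD (u v : rtype) : rval (u + v) = rval u + rval v. Proof. by []. Qed.
Lemma rvalZ a (u : rtype) : rval (a *: u) = a *: rval u. Proof. by []. Qed.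

End Range.
Arguments rtype {R L T phi}.
Arguments rng {R L T phi}.
Arguments rval {R L T phi philin}.
Arguments rvalP {R L T phi philin}.
Arguments rvalD {R L T phi philin}.
Arguments rvalZ {R L T phi philin}.

Section Gen.
Variables (R : realType) (X : Type).

Lemma colim_gen_range (Ob' : gobj R X -> Prop) (Hom' : homs R X) (T : lmodType R)
  (iT : forall p : gobj R X, E R (gdim R X p) -> T) :
  is_colimit R X Ob' Hom' T iT ->
  (forall p q f, Hom' p q f -> Ob' p /\ Ob' q) ->
  forall (L : lmodType R) (phi : L -> T), is_lin R L T phi ->
  (forall p, Ob' p -> forall v, exists z, phi z = iT p v) ->
  forall y, exists z, phi z = y.
Proof.
move=> [[iTlin iTc] HTu] HOb L phi philin Hin y.
pose S := rtype philin.
have inS p v : Ob' p -> iT p v \in rng philin by move=> Op; apply/asboolP; exact: Hin.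
pose iota' := fun p v => insubd (0 : S) (iT p v).
have viota p v : Ob' p -> rval (iota' p v) = iT p v.
  by move=> Op; rewrite /iota' insubdK // inS.
have cS : cocone R X Ob' Hom' S iota'.
  split.
    move=> p Op a u v; apply: val_inj => /=.
    by rewrite !viota // iTlin.
  move=> p q f Hf v; apply: val_inj => /=.
  have [Op Oq] := HOb p q f Hf.
  by rewrite !viota // iTc.
have [psi [psilin psiiT _]] := HTu S iota' cS.
have [id0 [_ _ uniq]] := HTu T iT (conj iTlin iTc).
have E1 : y = id0 y by apply: (uniq (fun t => t)).
have E2 : rval (psi y) = id0 y.
  apply: (uniq (fun t => rval (psi t))).
    by move=> a u v; rewrite psilin.
  by move=> p Op v; rewrite psiiT // viota.
have := rvalP (psi y); rewrite E2 -E1 => /asboolP.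
by [].
Qed.

End Gen.

Section Main.
Variable R : realType.

Lemma open_preim {n l} (W : set (E R n)) (W' : set (E R l)) (f : E R n -> E R l) :
  open W -> open W' -> (forall z, W z -> {for z, continuous f}) ->
  open (W `&` f @^-1` W').
Proof.
move=> oW oW' hf; rewrite openE => z [Wz W'fz].
rewrite /interior; apply: filterI.
  by apply: open_nbhs_nbhs; split.
apply: (hf z Wz).
by apply: open_nbhs_nbhs; split.
Qed.

Variables (X : Type) (D : diffeology R X) (x : X).

Lemma ghom_diff p q f : ghom R X D x p q f -> differentiable f 0.
Proof.
case=> _ [_ [W [[oW W0 _ sm] _]]].
exact: (@smooth_diff R _ _ _ _ _ oW sm W0).
Qed.

Lemma ghom_f0 p q f : ghom R X D x p q f -> f 0 = 0.
Proof. by case=> _ [_ [W [_ [_ f0 _]]]]. Qed.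

Lemma ghom_comp p q r f g : ghom R X D x p q f -> ghom R X D x q r g ->
  ghom R X D x p r (g \o f).
Proof.
move=> [gp [gq [W [[oW W0 Wp sm] [fW f0 pf]]]]] [_ [gr [W' [[oW' W'0 W'q sm'] [gW' g0 qg]]]]].
split => //; split => //.
exists (W `&` f @^-1` W').
have oW'' : open (W `&` f @^-1` W').
  apply: open_preim => // z Wz.
  exact: differentiable_continuous (@smooth_diff R _ _ _ _ _ oW sm Wz).
split; split => //.
- by split => //=; rewrite f0.
- by move=> z [Wz _]; exact: Wp.
- apply: (@smooth_comp R _ _ _ _ _ _ _ oW'' oW' (@smooth_sub R _ _ _ _ _ _ sm) sm').
    by move=> z [].
  by move=> z [].
- move=> _ [z [Wz W'fz] <-]; apply: gW'; exists (f z) => //.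
- by rewrite /= f0 g0.
- by move=> w [Ww W'fw]; rewrite /= pf // qg.
Qed.

End Main.
Arguments ghom_diff {R X D x p q f}.
Arguments ghom_f0 {R X D x p q f}.
Arguments ghom_comp {R X D x p q r f g}.

Theorem proposition3p2 (R : realType) (X : Type) (D : diffeology R X) (x : X)
    (Ob : gobj R X -> Prop) (Hom : homs R X)
    (HG : local_generating_category R X D x Ob Hom)
    (LG : lmodType R) (iG : forall p : gobj R X, E R (gdim R X p) -> LG)
    (HLG : is_colimit R X Ob Hom LG iG)
    (T : lmodType R) (iT : forall p : gobj R X, E R (gdim R X p) -> T)
    (HT : is_colimit R X (is_gobj R X D x) (ghom R X D x) T iT) :
  exists phi : LG -> T,
    [/\ is_lin R LG T phi,
        (forall p, Ob p -> forall v, phi (iG p v) = iT p v),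
        (forall y : T, exists z : LG, phi z = y) &
        (final_subcategory R X D x Ob Hom -> injective phi)].
Proof.
case: HG => [[HObg HHom HHomext HHomid HHomcomp] Hloc].
move: (HLG) => [[iGlin iGc] HLGu].
move: (HT) => [[iTlin iTc] HTu].
have cT : cocone R X Ob Hom T iT.
  split; first by move=> p /HObg; exact: iTlin.
  by move=> p q f /HHom [_ _ hf]; exact: iTc.
have [phi [philin phiiG phiuniq]] := HLGu T iT cT.
exists phi; split => //.
  apply: (@colim_gen_range R X _ _ _ _ HT) => //.
    by move=> p q f [gp [gq _]].
  move=> p gp v; have [q [f [Oq hf]]] := Hloc p gp.
  by exists (iG q ('d f 0 v)); rewrite phiiG // iTc.
move=> Hfin.
pose val (p : gobj R X) (a : comma_obj R X p) (v : E R (gdim R X p)) : LG :=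
  iG (projT1 a) ('d (projT2 a) 0 v).
have key : forall p, is_gobj R X D x p -> forall a b,
    comma_valid R X D x Ob p a -> comma_valid R X D x Ob p b ->
    forall v, val p a v = val p b v.
  move=> p gp a b Va Vb.
  elim: ((Hfin p gp).2 a b Va Vb) => {a b Va Vb}
    [a b [Va Vb [h [Hh Hg]]]|a|a b _ IH|a b c _ IH1 _ IH2] v; last 3 first.
  - by [].
  - by rewrite IH.
  - by rewrite IH1 IH2.
  case: a Va h Hh Hg => qa fa /= [Oqa ha] h Hh Hg.
  case: b Vb h Hh Hg => qb fb /= [Oqb hb] h Hh Hg.
  rewrite /val /=; simpl in ha, hb, Hg, Hh.
  have dfa := ghom_diff ha; have dfb := ghom_diff hb.
  have [_ _ hh] := HHom qa qb h Hh.
  have dh : differentiable h (fa 0) by rewrite (ghom_f0 ha); exact: ghom_diff hh.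
  have dhfa : differentiable (h \o fa) 0 by exact: differentiable_comp.
  have E1 : 'd fb 0 v = 'd h (fa 0) ('d fa 0 v).
    rewrite -(deriveE v dfb).
    have -> : 'D_v fb 0 = 'D_v (h \o fa) 0.
      apply: near_eq_derive.
      exact: (filterS (fun w (e : (h \o fa) w = fb w) => esym e) Hg).
    by rewrite (deriveE v dhfa) diff_comp.
  by rewrite E1 (ghom_f0 ha) (iGc qa qb h Hh).
have [ch chP] : exists ch : forall p, comma_obj R X p,
    forall p, is_gobj R X D x p -> comma_valid R X D x Ob p (ch p).
  exists (fun p => ClassicalEpsilon.epsilon (inhabits (existT _ p id)) (comma_valid R X D x Ob p)).
  move=> p gp; apply: ClassicalEpsilon.epsilon_spec; exact: (Hfin p gp).1.
pose iota' p v := val p (ch p) v.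
have ciota : cocone R X (is_gobj R X D x) (ghom R X D x) LG iota'.
  split.
    move=> p gp a u w; rewrite /iota' /val.
    case: (chP p gp) => Oq hq.
    by rewrite linearP iGlin.
  move=> p q f hf v.
  have [gp [gq _]] := hf.
  case: (chP q gq) => Oq' hg.
  pose b : comma_obj R X p := existT _ (projT1 (ch q)) (projT2 (ch q) \o f).
  have Vb : comma_valid R X D x Ob p b by split => //; exact: ghom_comp hf hg.
  rewrite /iota' (key p gp (ch p) b (chP p gp) Vb v).
  have dg : differentiable (projT2 (ch q)) (f 0) by rewrite (ghom_f0 hf); exact: ghom_diff hg.
  have -> : val p b v = iG (projT1 (ch q)) ('d (projT2 (ch q) \o f) 0 v) by [].
  rewrite (diff_comp (ghom_diff hf) dg).
  by rewrite (ghom_f0 hf).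
have [psi [psilin psiiT _]] := HTu LG iota' ciota.
have [id0 [_ _ uniq]] := HLGu LG iG (conj iGlin iGc).
have Hid z : psi (phi z) = z.
  have E1 : z = id0 z by apply: (uniq (fun t => t)).
  rewrite [RHS]E1; apply: (uniq (fun t => psi (phi t))).
    by move=> a u v; rewrite philin psilin.
  move=> p Op v; rewrite phiiG // psiiT; last exact: HObg.
  have [_ _ hid] := HHom p p id (HHomid p Op).
  have Vid : comma_valid R X D x Ob p (existT _ p id) by [].
  rewrite /iota' (key p (HObg p Op) (ch p) _ (chP p (HObg p Op)) Vid v) /val /=.
  by rewrite diff_val.
by move=> z1 z2 e; rewrite -(Hid z1) -(Hid z2) e.
Qed.
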